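(* Work in the projective model of $\mathbf{Nil}$ geometry described in the context. Let $P_1=(1,0,0,0)$, $P_2=(1,a,b,c)$ and $P_3=(1,d,e,f)$ with $ae-bd\neq0$. Then the translation-like triangular surface $S^{\mathbf{Nil},t}_{P_1,P_2,P_3}$ has the equation \[ z=\frac{xy}{2}+\frac{bde-abe+2ce-2bf}{2(ae-bd)}\,x+\frac{abd-ade+2af-2cd}{2(ae-bd)}\,y . \]
   Context: $\mathbf{Nil}$ is modelled on $\mathbb{R}^3$ with points in homogeneous coordinates $(1,x,y,z)$. For $Q=(1,q_1,q_2,q_3)$ the translation $\mathbf{T}_Q$ acts on row vectors from the right by $\begin{pmatrix}1&q_1&q_2&q_3\\0&1&0&0\\0&0&1&q_1\\0&0&0&1\end{pmatrix}$, i.e. $(1,a,b,c)\mapsto(1,q_1+a,q_2+b,q_3+bq_1+c)$, mapping $E_0=(1,0,0,0)$ to $Q$. A translation curve from $E_0$ with unit initial tangent $(u,v,w)$ is $x(t)=ut,\ y(t)=vt,\ z(t)=\frac12uvt^2+wt$; translation curves from $Q$ are their $\mathbf{T}_Q$-images. The translation-like triangular surface $S^{\mathbf{Nil},t}_{P_1,P_2,P_3}$ is the set of points $P$ such that the tangent vectors at $P$ of the translation curves from $P$ to $P_1$, $P_2$, $P_3$ are coplanar; equivalently, pulling back by $\mathbf{T}_P^{-1}$, such that the initial tangent vectors at $E_0$ of the translation curves from $E_0$ to $\mathbf{T}_P^{-1}(P_1),\mathbf{T}_P^{-1}(P_2),\mathbf{T}_P^{-1}(P_3)$ are linearly dependent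 (for a point $(1,x,y,z)$ a nonzero multiple of this initial tangent is $(x,y,z-\frac{xy}{2})$). *)

(* Defs.v *)
(* Nil geometry in the projective model: a point (1,x,y,z)
   is represented by its affine coordinates (x,y,z) : R * R * R. *)
From mathcomp Require Import all_boot all_order all_algebra.
Set Implicit Arguments. Unset Strict Implicit. Unset Printing Implicit Defensive.
Import Order.TTheory GRing.Theory Num.Theory.
Local Open Scope ring_scope.

Definition nilpt (R : Type) := (R * R * R)%type.

Section Nil.
Variable R : realFieldType.

Definition px (P : nilpt R) : R := P.1.1.
Definition py (P : nilpt R) : R := P.1.2.
Definition pz (P : nilpt R) : R := P.2.

Definition nil_transl (Q A : nilpt R) : nilpt R :=
  (px Q + px A, py Q + py A, pz Q + py A * px Q + pz A).

Definition nil_transl_inv (Q A : nilpt R) : nilpt R :=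
  (px A - px Q, py A - py Q, pz A - pz Q - px Q * (py A - py Q)).

(* A nonzero multiple of the initial tangent vector at E0 of the translation
   curve from E0 = (1,0,0,0) to the point (1,x,y,z): (x, y, z - x y / 2).
   (It is the zero vector exactly when the point is E0.) *)
Definition transl_tangent (A : nilpt R) : R * R * R :=
  (px A, py A, pz A - px A * py A / 2).

Definition lin_dep3 (u v w : R * R * R) : Prop :=
  exists l1 l2 l3 : R, (l1, l2, l3) <> (0, 0, 0) /\
    l1 * u.1.1 + l2 * v.1.1 + l3 * w.1.1 = 0 /\
    l1 * u.1.2 + l2 * v.1.2 + l3 * w.1.2 = 0 /\
    l1 * u.2   + l2 * v.2   + l3 * w.2   = 0.

(* The translation-like triangular surface S^{Nil,t}_{P1,P2,P3}: points P such
   that the initial tangents (pulled back by T_P^{-1}) of the translation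
   curves from P to P1, P2, P3 are linearly dependent. *)
Definition transl_tri_surface (P1 P2 P3 : nilpt R) : nilpt R -> Prop :=
  fun P => lin_dep3 (transl_tangent (nil_transl_inv P P1))
                    (transl_tangent (nil_transl_inv P P2))
                    (transl_tangent (nil_transl_inv P P3)).

End Nil.

(* Main.v *)
Require Import Defs.
From mathcomp Require Import all_boot all_order all_algebra.
From mathcomp Require Import ring lra.
Import Order.TTheory GRing.Theory Num.Theory.
Local Open Scope ring_scope.

Definition det3 {R : realFieldType} (u v w : R * R * R) : R :=
  u.1.1 * (v.1.2 * w.2 - v.2 * w.1.2) - u.1.2 * (v.1.1 * w.2 - v.2 * w.1.1)
  + u.2 * (v.1.1 * w.1.2 - v.1.2 * w.1.1).

Lemma dep_det (R : realFieldType) (u v w : R * R * R) :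
  lin_dep3 u v w -> det3 u v w = 0.
Proof.
case: u => [[u1 u2] u3]; case: v => [[v1 v2] v3]; case: w => [[w1 w2] w3].
move=> [l1 [l2 [l3 [nz [h1 [h2 h3]]]]]]; rewrite /det3 /= in h1 h2 h3 *.
set D := (X in X = 0).
have e1 : l1 * D = 0.
  have -> : l1 * D = (l1 * u1 + l2 * v1 + l3 * w1) * (v2 * w3 - v3 * w2)
     - (l1 * u2 + l2 * v2 + l3 * w2) * (v1 * w3 - v3 * w1)
     + (l1 * u3 + l2 * v3 + l3 * w3) * (v1 * w2 - v2 * w1) by rewrite /D; ring.
  by rewrite h1 h2 h3; ring.
have e2 : l2 * D = 0.
  have -> : l2 * D = (l1 * u1 + l2 * v1 + l3 * w1) * (w2 * u3 - w3 * u2)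
     - (l1 * u2 + l2 * v2 + l3 * w2) * (w1 * u3 - w3 * u1)
     + (l1 * u3 + l2 * v3 + l3 * w3) * (w1 * u2 - w2 * u1) by rewrite /D; ring.
  by rewrite h1 h2 h3; ring.
have e3 : l3 * D = 0.
  have -> : l3 * D = (l1 * u1 + l2 * v1 + l3 * w1) * (u2 * v3 - u3 * v2)
     - (l1 * u2 + l2 * v2 + l3 * w2) * (u1 * v3 - u3 * v1)
     + (l1 * u3 + l2 * v3 + l3 * w3) * (u1 * v2 - u2 * v1) by rewrite /D; ring.
  by rewrite h1 h2 h3; ring.
move/eqP: e1; move/eqP: e2; move/eqP: e3; rewrite !mulf_eq0.
case/orP=> [/eqP l30|/eqP //]; case/orP=> [/eqP l20|/eqP //]; case/orP=> [/eqP l10|/eqP //].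
by exfalso; apply: nz; rewrite l10 l20 l30.
Qed.

Theorem lemma4p6 (R : realFieldType) (a b c d e f : R) :
  a * e - b * d != 0 ->
  forall P : nilpt R,
    transl_tri_surface (0, 0, 0) (a, b, c) (d, e, f) P <->
    pz P = px P * py P / 2
           + (b * d * e - a * b * e + 2 * c * e - 2 * b * f)
               / (2 * (a * e - b * d)) * px P
           + (a * b * d - a * d * e + 2 * a * f - 2 * c * d)
               / (2 * (a * e - b * d)) * py P.
Proof.
move=> hD [[x y] z].
rewrite /transl_tri_surface /transl_tangent /nil_transl_inv /px /py /pz /=.
have h2 : (2 : R) != 0 by rewrite pnatr_eq0.
split.
  move=> /dep_det; rewrite /det3 /= => hdet.
  apply/eqP; rewrite -subr_eq0; apply/eqP.
  set L := (X in X = 0).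
  have hm : (a * e - b * d) * L = - det3 (0 - x, 0 - y, 0 - z - x * (0 - y) - (0 - x) * (0 - y) / 2)
     (a - x, b - y, c - z - x * (b - y) - (a - x) * (b - y) / 2)
     (d - x, e - y, f - z - x * (e - y) - (d - x) * (e - y) / 2).
    rewrite /L /det3 /=; field; rewrite ?h2 ?hD /=; try done.
  move: hm; rewrite /det3 /= hdet oppr0 => /eqP; rewrite mulf_eq0 (negbTE hD) /=.
  by move/eqP.
move=> hz.
exists (a * e - b * d - (x * e - y * d) - (a * y - b * x)), (x * e - y * d), (a * y - b * x).
split.
  case=> h1' h2' h3'; move/eqP: hD; apply.
  by move: h1'; rewrite h2' h3' !subr0.
rewrite hz /=; split; first by ring.
split; first by ring.
field; rewrite ?h2 ?hD /=; try done.
Qed.
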